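(* Let $a_{n,k}$ be the number of matchings of size $n$ with exactly $k$ occurrences of the endhered pattern $21$. For every fixed $k\ge0$, as $n\to\infty$, $$\frac{a_{n,k}}{a_{n,k+1}}\to 2(k+1).$$
   Context: A matching of size $n$ is a set of $n$ arcs $(a,b)$ with $1\le a<b\le 2n$ such that each point of $\{1,\dots,2n\}$ belongs to exactly one arc. An occurrence of the endhered pattern $21$ in a matching is a pair of arcs of the form $(i+1,j+2),(i+2,j+1)$ (two nested arcs with consecutive starting points and consecutive ending points); the number of occurrences is the number of such pairs. *)

(* Defs.v *)
From mathcomp Require Import all_boot.
From Stdlib Require Import Reals.

Set Implicit Arguments.
Unset Strict Implicit.
Unset Printing Implicit Defensive.

(* Points are labelled 0, ..., 2n-1 (the paper's 1..2n shifted by one). *)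
Definition arc n := ('I_(2 * n) * 'I_(2 * n))%type.

Definition is_matching n (M : {set arc n}) : bool :=
  [forall p in M, (p.1 < p.2)%N] &&
  [forall x : 'I_(2 * n), #|[set p in M | (p.1 == x) || (p.2 == x)]| == 1%N].

Definition has_arc n (M : {set arc n}) (a b : nat) : bool :=
  [exists p in M, (nat_of_ord p.1 == a) && (nat_of_ord p.2 == b)].

(* occurrences of the endhered pattern 21: pairs of arcs (i+1, j+2), (i+2, j+1)
   in the paper's labelling, i.e. (i, j+1), (i+1, j) in ours; an occurrence is
   determined by the pair (i, j). *)
Definition occ21 n (M : {set arc n}) : nat :=
  #|[set q : 'I_(2 * n) * 'I_(2 * n) |
      has_arc M q.1 q.2.+1 && has_arc M q.1.+1 q.2]|.

Definition a_nk (n k : nat) : nat :=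
  #|[set M : {set arc n} | is_matching M && (occ21 M == k)]|.

(* Main.v *)
Require Import Defs.
From mathcomp Require Import all_boot zify.
From Stdlib Require Import Reals Lra.

Set Implicit Arguments.
Unset Strict Implicit.
Unset Printing Implicit Defensive.


Notation arcT := Defs.arc.

Section Gen.
Variable m : nat.
Implicit Types M : {set arcT m}.

Lemma has_arcE M (p : arcT m) : has_arc M p.1 p.2 = (p \in M).
Proof.
apply/existsP/idP => [[q /andP[qM /andP[/eqP e1 /eqP e2]]]|pM]; last first.
  by exists p; rewrite pM !eqxx.
have -> : p = q by case: p q e1 e2 qM => [p1 p2] [q1 q2] /= e1 e2 _; congr pair; apply: val_inj.
done.
Qed.

Lemma has_arcP M a b : reflect (exists2 p, p \in M & (p.1 : nat) = a /\ (p.2 : nat) = b) (has_arc M a b).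
Proof.
apply: (iffP existsP) => [[p /andP[pM /andP[/eqP e1 /eqP e2]]]|[p pM [e1 e2]]].
  by exists p.
by exists p; rewrite pM e1 e2 !eqxx.
Qed.

Lemma has_arc_bound M a b : has_arc M a b -> a < 2 * m /\ b < 2 * m.
Proof. by case/has_arcP => p _ [<- <-]; split. Qed.

Lemma has_arc_setE (R : nat -> nat -> bool) a b :
  has_arc [set p : arcT m | R p.1 p.2] a b = [&& R a b, a < 2 * m & b < 2 * m].
Proof.
apply/has_arcP/and3P => [[p] | [Rab ha hb]].
  by rewrite inE => Rp [<- <-]; split.
by exists (Ordinal ha, Ordinal hb); rewrite ?inE.
Qed.

Lemma arc_ext M1 M2 : (forall a b, has_arc M1 a b = has_arc M2 a b) -> M1 = M2.
Proof. by move=> H; apply/setP => p; rewrite -!has_arcE H. Qed.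

End Gen.

Definition matchR (m : nat) (R : nat -> nat -> bool) : Prop :=
  [/\ (forall a b, R a b -> a < b < 2 * m),
      (forall x, x < 2 * m -> exists y, R x y || R y x),
      (forall x y z, R x y -> R x z -> y = z),
      (forall x y z, R y x -> R z x -> y = z) &
      (forall x y z, R x y -> R z x -> False)].

Lemma matchingP m (M : {set arcT m}) : is_matching M <-> matchR m (has_arc M).
Proof.
split.
- case/andP => /forall_inP Hlt /forallP Hc.
  have uniq1 (x : 'I_(2 * m)) p q : p \in M -> q \in M ->
      (p.1 == x) || (p.2 == x) -> (q.1 == x) || (q.2 == x) -> p = q.
    move=> pM qM px qx; have /cards1P [p0 E] := Hc x.
    have : p \in [set p in M | (p.1 == x) || (p.2 == x)] by rewrite inE pM px.
    have : q \in [set p in M | (p.1 == x) || (p.2 == x)] by rewrite inE qM qx.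
    by rewrite E !inE => /eqP -> /eqP ->.
  split.
  + move=> a b /has_arcP [p pM [<- <-]]; by rewrite Hlt // ltn_ord.
  + move=> x hx; have /cards1P [p0 E] := Hc (Ordinal hx).
    have : p0 \in [set p in M | (p.1 == Ordinal hx) || (p.2 == Ordinal hx)] by rewrite E set11.
    rewrite inE => /andP [p0M /orP [/eqP e|/eqP e]].
    * exists p0.2; apply/orP; left; apply/has_arcP; exists p0 => //; by rewrite e.
    * exists p0.1; apply/orP; right; apply/has_arcP; exists p0 => //; by rewrite e.
  + move=> x y z /has_arcP [p pM [e1 e2]] /has_arcP [q qM [f1 f2]].
    have hx : x < 2 * m by rewrite -e1.
    have := uniq1 (Ordinal hx) p q pM qM; rewrite -!(inj_eq val_inj) /= e1 f1 eqxx => /(_ isT isT) pq.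
    by rewrite -e2 -f2 pq.
  + move=> x y z /has_arcP [p pM [e1 e2]] /has_arcP [q qM [f1 f2]].
    have hx : x < 2 * m by rewrite -e2.
    have := uniq1 (Ordinal hx) p q pM qM; rewrite -!(inj_eq val_inj) /= e2 f2 eqxx !orbT => /(_ isT isT) pq.
    by rewrite -e1 -f1 pq.
  + move=> x y z /has_arcP [p pM [e1 e2]] /has_arcP [q qM [f1 f2]].
    have hx : x < 2 * m by rewrite -e1.
    have := uniq1 (Ordinal hx) p q pM qM; rewrite -!(inj_eq val_inj) /= e1 f2 eqxx !orbT => /(_ isT isT) pq.
    subst q; have := Hlt p pM; lia.
- case=> H1 H2 H3 H4 H5; apply/andP; split.
  + by apply/forall_inP => p pM; have /H1/andP[] : has_arc M p.1 p.2 by rewrite has_arcE.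
  + apply/forallP => x; apply/cards1P.
    have [y /orP [Rxy|Ryx]] := H2 x (ltn_ord x).
    * case/has_arcP: (Rxy) => p pM [e1 e2]; exists p; apply/setP => q; rewrite !inE.
      apply/idP/idP => [/andP [qM /orP [/eqP qx|/eqP qx]]|/eqP ->]; last by rewrite pM -(inj_eq val_inj) /= e1 eqxx.
      -- have := H3 x q.2 y; rewrite -qx has_arcE qM => /(_ isT); rewrite qx Rxy => /(_ isT) e.
         apply/eqP; case: p q e1 e2 qx e pM qM {Rxy} => [p1 p2] [q1 q2] /= e1 e2 qx e _ _.
         by congr pair; apply: val_inj => /=; rewrite ?e1 ?e2 ?qx.
      -- exfalso; apply: (H5 x y q.1) => //; rewrite -qx has_arcE //.
    * case/has_arcP: (Ryx) => p pM [e1 e2]; exists p; apply/setP => q; rewrite !inE.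
      apply/idP/idP => [/andP [qM /orP [/eqP qx|/eqP qx]]|/eqP ->]; last by rewrite pM -!(inj_eq val_inj) /= e2 eqxx orbT.
      -- exfalso; apply: (H5 x q.2 y) => //; rewrite -qx has_arcE //.
      -- have := H4 x q.1 y; rewrite -qx has_arcE qM => /(_ isT); rewrite qx Ryx => /(_ isT) e.
         apply/eqP; case: p q e1 e2 qx e pM qM {Ryx} => [p1 p2] [q1 q2] /= e1 e2 qx e _ _.
         by congr pair; apply: val_inj => /=; rewrite ?e1 ?e2 ?qx.
Qed.


Definition sg (s t u : nat) := bump t (bump s u).
Definition usg (s t a : nat) := unbump s (unbump t a).
Section Sig.
Variables s t : nat.
Hypothesis st : s < t.
Lemma sig_neq_s u : sg s t u <> s.
Proof. rewrite /sg /bump; case: (leqP s u); case: leqP => /=; lia. Qed.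
Lemma sig_neq_t u : sg s t u <> t.
Proof. rewrite /sg /bump; case: (leqP s u); case: leqP => /=; lia. Qed.
Lemma sig_mono u v : (sg s t u < sg s t v) = (u < v).
Proof. rewrite /sg /bump; case: (leqP s u); case: (leqP s v) => /=; case: (leqP t (_ + u)); case: (leqP t (_ + v)) => /=; lia. Qed.
Lemma sig_inj u v : sg s t u = sg s t v -> u = v.
Proof. move=> e; have := sig_mono u v; have := sig_mono v u; rewrite e ltnn; lia. Qed.
Lemma usigK a : a <> s -> a <> t -> sg s t (usg s t a) = a.
Proof. rewrite /sg /usg /bump /unbump => h1 h2; case: (ltnP t a) => /=; case: (ltnP s _) => /=; case: (leqP s _) => /=; case: (leqP t _) => /=; lia. Qed.
Lemma sigK u : usg s t (sg s t u) = u.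
Proof. rewrite /sg /usg /bump /unbump; case: (leqP s u) => /=; case: (leqP t _) => /=; case: (ltnP t _) => /=; case: (ltnP s _) => /=; lia. Qed.
Lemma sig_lt N u : t < N.+2 -> (sg s t u < N.+2) = (u < N).
Proof. rewrite /sg /bump => h; case: (leqP s u); case: (leqP t _) => /=; case: ltnP; case: ltnP; lia. Qed.
Lemma sig_ge u : u <= sg s t u.
Proof. rewrite /sg /bump; case: (leqP s u); case: (leqP t _) => /=; lia. Qed.
End Sig.

Definition isvR n (M : {set arcT n}) s t (a b : nat) :=
  ((a == s) && (b == t)) ||
     [&& a != s, a != t, b != s, b != t & has_arc M (usg s t a) (usg s t b)].
Definition isv n (M : {set arcT n}) s t : {set arcT n.+1} :=
  [set p : arcT n.+1 | isvR M s t p.1 p.2].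
Definition rmvR n (M : {set arcT n.+1}) s t (a b : nat) := has_arc M (sg s t a) (sg s t b).
Definition rmv n (M : {set arcT n.+1}) s t : {set arcT n} :=
  [set p : arcT n | rmvR M s t p.1 p.2].

Section InsRem.
Variable n : nat.

Lemma isvP (M : {set arcT n}) s t a b : s < t -> t < 2 * n.+1 ->
  has_arc (isv M s t) a b <->
  (a = s /\ b = t) \/ exists u v, [/\ a = sg s t u, b = sg s t v & has_arc M u v].
Proof.
move=> st tN; rewrite /isv has_arc_setE /isvR; split.
- case/and3P => /orP [/andP [/eqP -> /eqP ->]|/and5P [/eqP h1 /eqP h2 /eqP h3 /eqP h4 H]] _ _; first by left.
  by right; exists (usg s t a), (usg s t b); rewrite !usigK.
- case => [[-> ->]|[u [v [-> -> H]]]]; first by rewrite !eqxx /=; apply/andP; split; lia.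
  have [hu hv] := has_arc_bound H.
  have X : 2 * n.+1 = (2 * n).+2 by lia.
  rewrite X !sig_lt ?hu ?hv -?X // !(sigK st) H !andbT.
  apply/orP; right; apply/and4P; split; apply/eqP; by [apply: sig_neq_s|apply: sig_neq_t].
Qed.

Lemma rmvE (M : {set arcT n.+1}) s t u v : s < t -> t < 2 * n.+1 ->
  has_arc (rmv M s t) u v = has_arc M (sg s t u) (sg s t v).
Proof.
move=> st tN; rewrite /rmv has_arc_setE /rmvR.
case H : (has_arc M _ _) => //=; have [hu hv] := has_arc_bound H.
have X : 2 * n.+1 = (2 * n).+2 by lia.
by move: hu hv; rewrite X !sig_lt -?X // => -> ->.
Qed.


Lemma ins_match (M : {set arcT n}) s t : s < t -> t < 2 * n.+1 ->
  matchR n (has_arc M) -> matchR n.+1 (has_arc (isv M s t)).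
Proof.
move=> st tN [H1 H2 H3 H4 H5].
have E := isvP M _ _ st tN.
have X : 2 * n.+1 = (2 * n).+2 by lia.
split.
- move=> a b /E [[-> ->]|[u [v [-> -> h]]]]; first by rewrite st.
  have /andP[uv vb] := H1 _ _ h.
  by rewrite sig_mono // uv /= X sig_lt -?X.
- move=> x hx; case: (x =P s) => [->|xs].
    by exists t; apply/orP; left; apply/E; left.
  case: (x =P t) => [->|xt].
    by exists s; apply/orP; right; apply/E; left.
  have xu : x = sg s t (usg s t x) by rewrite usigK.
  have hu : usg s t x < 2 * n by move: hx; rewrite {1}xu X sig_lt -?X.
  have [w /orP [h|h]] := H2 _ hu; exists (sg s t w); apply/orP; [left|right]; apply/E; right.
  + by exists (usg s t x), w.
  + by exists w, (usg s t x).
- move=> x y z /E [[e1 e2]|[u [v [e1 e2 h]]]] /E [[f1 f2]|[u' [v' [f1 f2 h']]]].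
  + by rewrite e2 f2.
  + by exfalso; move: (@sig_neq_s _ _ st u'); rewrite -f1 e1 => /(_ erefl).
  + by exfalso; move: (@sig_neq_s _ _ st u); rewrite -e1 f1 => /(_ erefl).
  + rewrite e1 in f1; have eu := sig_inj st f1; subst u'.
    by rewrite e2 f2 (H3 _ _ _ h h').
- move=> x y z /E [[e1 e2]|[u [v [e1 e2 h]]]] /E [[f1 f2]|[u' [v' [f1 f2 h']]]].
  + by rewrite e1 f1.
  + by exfalso; move: (@sig_neq_t _ _ st v'); rewrite -f2 e2 => /(_ erefl).
  + by exfalso; move: (@sig_neq_t _ _ st v); rewrite -e2 f2 => /(_ erefl).
  + rewrite e2 in f2; have eu := sig_inj st f2; subst v'.
    by rewrite e1 f1 (H4 _ _ _ h h').
- move=> x y z /E [[e1 e2]|[u [v [e1 e2 h]]]] /E [[f1 f2]|[u' [v' [f1 f2 h']]]].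
  + by move: st; rewrite -e1 -f2 ltnn.
  + by move: (@sig_neq_s _ _ st v'); rewrite -f2 e1 => /(_ erefl).
  + by move: (@sig_neq_t _ _ st u); rewrite -e1 f2 => /(_ erefl).
  + rewrite e1 in f2; have eu := sig_inj st f2; subst v'.
    exact: (H5 _ _ _ h h').
Qed.

Lemma rem_match (M : {set arcT n.+1}) s t :
  matchR n.+1 (has_arc M) -> has_arc M s t -> matchR n (has_arc (rmv M s t)).
Proof.
move=> [H1 H2 H3 H4 H5] Mst.
have /andP [st tN] := H1 _ _ Mst.
have E := rmvE M _ _ st tN.
have X : 2 * n.+1 = (2 * n).+2 by lia.
split.
- move=> a b; rewrite E => /H1 /andP [ab bN].
  by move: ab bN; rewrite sig_mono // X sig_lt -?X // => -> ->.
- move=> x hx.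
  have hx' : sg s t x < 2 * n.+1 by rewrite X sig_lt -?X.
  have [w hw] := H2 _ hx'.
  have ws : w <> s.
    move=> ews; subst w; case/orP: hw => h.
    * exact: (H5 _ _ _ Mst h).
    * by move: (@sig_neq_t _ _ st x); rewrite (H3 _ _ _ h Mst) => /(_ erefl).
  have wt : w <> t.
    move=> ews; subst w; case/orP: hw => h.
    * by move: (@sig_neq_s _ _ st x); rewrite (H4 _ _ _ h Mst) => /(_ erefl).
    * exact: (H5 _ _ _ h Mst).
  exists (usg s t w); rewrite !E usigK //.
- move=> x y z; rewrite !E => h h'; exact: (sig_inj st (H3 _ _ _ h h')).
- move=> x y z; rewrite !E => h h'; exact: (sig_inj st (H4 _ _ _ h h')).
- move=> x y z; rewrite !E => h h'; exact: (H5 _ _ _ h h').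
Qed.

Lemma rem_ins (M : {set arcT n}) s t : s < t -> t < 2 * n.+1 ->
  rmv (isv M s t) s t = M.
Proof.
move=> st tN; apply: arc_ext => a b; rewrite rmvE //.
apply/idP/idP => [/(isvP M _ _ st tN) [[e1 _]|[u [v [e1 e2 h]]]] | h].
- by case: (@sig_neq_s _ _ st a).
- by rewrite (sig_inj st e1) (sig_inj st e2).
- by apply/(isvP M _ _ st tN); right; exists a, b.
Qed.

Lemma ins_rem (M : {set arcT n.+1}) s t :
  matchR n.+1 (has_arc M) -> has_arc M s t -> isv (rmv M s t) s t = M.
Proof.
move=> [H1 H2 H3 H4 H5] Mst.
have /andP [st tN] := H1 _ _ Mst.
apply: arc_ext => a b; apply/idP/idP.
- by case/(isvP (rmv M s t) _ _ st tN) => [[-> ->]|[u [v [-> -> h]]]] //; rewrite -rmvE.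
- move=> h; apply/(isvP (rmv M s t) _ _ st tN); case: (a =P s) => [eas|nas].
    by left; subst a; split => //; apply: (H3 _ _ _ h Mst).
  right; exists (usg s t a), (usg s t b).
  have nat : a <> t by move=> e; subst a; exact: (H5 _ _ _ h Mst).
  have nbs : b <> s by move=> e; subst b; exact: (H5 _ _ _ Mst h).
  have nbt : b <> t by move=> e; subst b; exact: (nas (H4 _ _ _ h Mst)).
  by rewrite rmvE // !usigK.
Qed.

End InsRem.


Definition ord0n n : 'I_(2 * n.+1) := Ordinal (n:=2 * n.+1) (m:=0) isT.
Definition mk n (v : nat) : 'I_(2 * n.+1) := insubd (ord0n n) v.
Lemma mkE n v : v < 2 * n.+1 -> (mk n v : nat) = v.
Proof. by move=> h; rewrite /mk val_insubd h. Qed.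

Lemma has_arc_mk n (M : {set arcT n.+1}) a b : a < 2 * n.+1 -> b < 2 * n.+1 ->
  has_arc M a b = ((mk n a, mk n b) \in M).
Proof. by move=> ha hb; rewrite -has_arcE /= !mkE. Qed.

Lemma card_bij (T1 T2 : finType) (A : {set T1}) (B : {set T2}) (f : T1 -> T2) (g : T2 -> T1) :
  {in A, forall x, f x \in B} -> {in B, forall y, g y \in A} ->
  {in A, cancel f g} -> {in B, cancel g f} -> #|A| = #|B|.
Proof.
move=> fAB gBA fK gK; apply/eqP; rewrite eqn_leq; apply/andP; split.
- rewrite -(card_in_imset (f := f) (D := A)); last exact: can_in_inj fK.
  apply: subset_leq_card; apply/subsetP => y /imsetP [x xA ->]; exact: fAB.
- rewrite -(card_in_imset (f := g) (D := B)); last exact: can_in_inj gK.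
  apply: subset_leq_card; apply/subsetP => y /imsetP [x xA ->]; exact: gBA.
Qed.

Lemma card_dep (T1 T2 : finType) (A : {set T1}) (F : T1 -> {set T2}) :
  #|[set X : T1 * T2 | (X.1 \in A) && (X.2 \in F X.1)]| = \sum_(x in A) #|F x|.
Proof.
rewrite -sum1dep_card -(pair_big_dep (fun x => x \in A) (fun x y => y \in F x) (fun _ _ => 1)).
by apply: eq_bigr => x _; rewrite sum1dep_card cardsE.
Qed.

Definition Match n := [set M : {set arcT n} | is_matching M].

Lemma arcT0_empty (M : {set arcT 0}) : M = set0.
Proof. by apply/setP => -[[x hx] y]; exfalso; move: hx; rewrite muln0. Qed.

Lemma card_Match0 : #|Match 0| = 1.
Proof.
apply/eqP/cards1P; exists set0; apply/setP => M; rewrite !inE (arcT0_empty M) eqxx.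
apply/andP; split; apply/forallP.
- by move=> -[[x hx] ?]; exfalso; move: hx; rewrite muln0.
- by move=> -[x hx]; exfalso; move: hx; rewrite muln0.
Qed.

Definition sarc n s t (p : arcT n) : arcT n.+1 := (mk n (sg s t p.1), mk n (sg s t p.2)).

Lemma card_ins n (M : {set arcT n}) s t : s < t -> t < 2 * n.+1 ->
  #|isv M s t| = #|M|.+1.
Proof.
move=> st tN.
have X : 2 * n.+1 = (2 * n).+2 by lia.
have sb (u : 'I_(2 * n)) : sg s t u < 2 * n.+1 by rewrite X sig_lt -?X.
have E : isv M s t = (mk n s, mk n t) |: [set sarc s t p | p in M].
  apply: arc_ext => a b; apply/idP/idP.
  - case/(isvP M _ _ st tN) => [[-> ->]|[u [v [-> -> /has_arcP [p pM [<- <-]]]]]].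
      by rewrite has_arc_mk ?setU11 //; lia.
    by rewrite has_arc_mk // setU1r // imset_f.
  - case/has_arcP => q; rewrite !inE => /orP [/eqP -> [<- <-]|/imsetP [p pM ->] [<- <-]].
      by apply/(isvP M _ _ st tN); left; rewrite !mkE //; lia.
    apply/(isvP M _ _ st tN); right; exists p.1, p.2; rewrite /= !mkE //; split => //.
    by rewrite has_arcE.
rewrite E cardsU1 card_in_imset; last first.
  move=> p q _ _ /= [/(congr1 (@nat_of_ord _)) e1 /(congr1 (@nat_of_ord _)) e2]; move: e1 e2; rewrite !mkE // => e1 e2.
  by case: p q e1 e2 => [p1 p2] [q1 q2] /= /(sig_inj st) e1 /(sig_inj st) e2; congr pair; apply: val_inj.
suff -> : (mk n s, mk n t) \notin [set sarc s t p | p in M] by rewrite add1n.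
apply/imsetP => -[p _ [/(congr1 (@nat_of_ord _)) e _]].
move: e; rewrite !mkE //; try lia.
move/esym; exact: sig_neq_s.
Qed.

Definition pt n (M : {set arcT n}) : nat :=
  if [pick p in M | (p.1 : nat) == 0] is Some p then p.2 else 0.

Lemma ptP n (M : {set arcT n.+1}) : matchR n.+1 (has_arc M) -> has_arc M 0 (pt M).
Proof.
case=> H1 H2 H3 H4 H5.
have [y /orP [h|h]] := H2 0 isT; last by have := H1 _ _ h.
rewrite /pt; case: pickP => [p /andP [pM /eqP p0]|none].
  by apply/has_arcP; exists p.
case/has_arcP: h => p pM [p0 _]; have := none p; by rewrite pM p0.
Qed.

Lemma card_match n (M : {set arcT n}) : matchR n (has_arc M) -> #|M| = n.
Proof.
elim: n M => [|n IH] M HM; first by rewrite (arcT0_empty M) cards0.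
have h0 := ptP HM.
have /andP [st tN] : 0 < pt M < 2 * n.+1 by case: HM => H1 *; apply: H1.
by rewrite -(ins_rem HM h0) card_ins // IH //; apply: rem_match.
Qed.

Lemma card_Match_rec n : #|Match n.+1| = (2 * n).+1 * #|Match n|.
Proof.
rewrite [RHS]mulnC.
rewrite -[(2 * n).+1]card_ord -cardsT -cardsX.
symmetry.
apply: (@card_bij _ _ _ _ (fun Y : {set arcT n} * 'I_(2 * n).+1 => isv Y.1 0 Y.2.+1)
                 (fun M : {set arcT n.+1} => (rmv M 0 (pt M), inord (pt M).-1))).
- move=> [M t]; rewrite !inE ?andbT /= => /matchingP HM; apply/matchingP; apply: ins_match => //.
  rewrite /=; have := ltn_ord t; lia.
- move=> M; rewrite !inE ?andbT => /matchingP HM; apply/matchingP; apply: rem_match => //; exact: ptP.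
- move=> [M t]; rewrite !inE ?andbT /= => /matchingP HM.
  have tb : t.+1 < 2 * n.+1 by have := ltn_ord t; lia.
  have Hi := ins_match (ltn0Sn t) tb HM.
  have e : pt (isv M 0 t.+1) = t.+1.
    case: (Hi) => _ _ H3 _ _; apply: (H3 0); first exact: ptP Hi.
    by apply/(isvP M _ _ (ltn0Sn t) tb); left.
  rewrite e rem_ins //; congr pair; apply: val_inj; rewrite /= inordK //.
- move=> M; rewrite !inE ?andbT => /matchingP HM.
  have h0 := ptP HM.
  have /andP [st tN] : 0 < pt M < 2 * n.+1 by case: HM => H1 *; apply: H1.
  rewrite /= inordK; last by lia.
  by rewrite prednK // ins_rem.
Qed.


Definition Occ n (M : {set arcT n}) :=
  [set q : 'I_(2 * n) * 'I_(2 * n) | has_arc M q.1 q.2.+1 && has_arc M q.1.+1 q.2].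

Lemma occ21E n (M : {set arcT n}) : occ21 M = #|Occ M|.
Proof. by []. Qed.

Lemma isv_sg n (M : {set arcT n}) s t u v : s < t -> t < 2 * n.+1 ->
  has_arc (isv M s t) (sg s t u) (sg s t v) = has_arc M u v.
Proof.
move=> st tN; apply/idP/idP.
- case/(isvP M _ _ st tN) => [[e _]|[u' [v' [e1 e2 h]]]]; first by case: (@sig_neq_s _ _ st u).
  by rewrite (sig_inj st e1) (sig_inj st e2).
- by move=> h; apply/(isvP M _ _ st tN); right; exists u, v.
Qed.

Section Occ.
Variables (n : nat) (M : {set arcT n}) (x y : nat).
Hypothesis HM : matchR n (has_arc M).
Hypothesis Mxy : has_arc M x y.

Let xy : x < y < 2 * n.
Proof. by case: HM => H1 *; apply: H1. Qed.
Let st : x.+1 < y.+1.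
Proof. by case/andP: xy. Qed.
Let tN : y.+1 < 2 * n.+1.
Proof. case/andP: xy => *; lia. Qed.

Local Notation sgm := (sg x.+1 y.+1).

Lemma occ_core b1 b2 : has_arc M b1 b2 -> 0 < b1 ->
  has_arc (isv M x.+1 y.+1) (sgm b1).-1 (sgm b2).+1 = has_arc M b1.-1 b2.+1.
Proof.
case: HM => H1 H2 H3 H4 H5 Mb b1p.
have /andP [b12 b2N] := H1 _ _ Mb.
have /andP [xy' yN] := xy.
have b2x : b2 <> x by move=> e; subst b2; exact: (H5 _ _ _ Mxy Mb).
have b1y : b1 <> y by move=> e; subst b1; exact: (H5 _ _ _ Mb Mxy).
case: (b1 =P x.+1) => [eb1|nb1].
- subst b1.
  have -> : (sgm x.+1).-1 = x.+1 by rewrite /sg /bump; lia.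
  apply/idP/idP.
  + case/(isvP M _ _ st tN) => [[_ e]|[u [v [e _ _]]]]; last by case: (@sig_neq_s _ _ st u).
    have e' : b2.+1 = y by move: e; rewrite /sg /bump; lia.
    by rewrite /= e'.
  + move=> h; have e := H3 _ _ _ Mxy h.
    apply/(isvP M _ _ st tN); left; split => //; rewrite /sg /bump; lia.
- have -> : (sgm b1).-1 = sgm b1.-1 by rewrite /sg /bump; lia.
  case: (b2.+1 =P y) => [eb2|nb2].
  + have -> : (sgm b2).+1 = y.+1 by rewrite /sg /bump; lia.
    rewrite eb2; apply/idP/idP.
    * case/(isvP M _ _ st tN) => [[e _]|[u [v [_ e _]]]]; first by case: (@sig_neq_s _ _ st b1.-1).
      by case: (@sig_neq_t _ _ st v).
    * move=> h; have e := H4 _ _ _ h Mxy; exfalso; lia.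
  + have -> : (sgm b2).+1 = sgm b2.+1 by rewrite /sg /bump; lia.
    exact: isv_sg.
Qed.

Definition tau (q : 'I_(2 * n) * 'I_(2 * n)) : 'I_(2 * n.+1) * 'I_(2 * n.+1) :=
  (mk n (sgm q.1.+1).-1, mk n (sgm q.2)).

Lemma sgm_lt u : u < 2 * n -> sgm u < 2 * n.+1.
Proof. move=> h; rewrite /sg /bump; lia. Qed.

Lemma Occ_isv : Occ (isv M x.+1 y.+1) = (mk n x, mk n y.+1) |: [set tau q | q in Occ M].
Proof.
have /andP [xy' yN] := xy.
case: (HM) => H1 H2 H3 H4 H5.
apply/setP => q; rewrite !inE; apply/andP/orP.
- case=> h1 h2.
  case/(isvP M _ _ st tN): h2 => [[e1 e2]|[u [v [e1 e2 Muv]]]].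
    left; apply/eqP; case: q e1 e2 {h1} => q1 q2 /= e1 e2; congr pair; apply: val_inj; rewrite /= mkE; lia.
  right.
  have u0 : 0 < u by move: e1; rewrite /sg /bump; lia.
  have /andP [uv vN] := H1 _ _ Muv.
  have Mp : has_arc M u.-1 v.+1.
    rewrite -(occ_core Muv u0) -e1 -e2 /=; exact: h1.
  have hu : u.-1 < 2 * n by lia.
  apply/imsetP; exists (Ordinal hu, Ordinal vN).
    rewrite inE /=; rewrite prednK //; by rewrite Mp Muv.
  case: q e1 e2 {h1} => q1 q2 /= e1 e2; congr pair; apply: val_inj; rewrite /= mkE ?prednK //; try lia.
  - have := sgm_lt (ltn_trans uv vN); lia.
  - exact: sgm_lt.
- case=> [/eqP ->|/imsetP [[i j] /= Oij ->]].
  + rewrite /= !mkE; try lia.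
    split.
    * have e1 : x = sgm x by rewrite /sg /bump; lia.
      have e2 : y.+2 = sgm y by rewrite /sg /bump; lia.
      by rewrite [X in has_arc _ X _]e1 [X in has_arc _ _ X]e2 isv_sg.
    * by apply/(isvP M _ _ st tN); left.
  + rewrite inE /= in Oij; case/andP: Oij => Mo Mi.
    have hi := ltn_ord i; have hj := ltn_ord j.
    have /andP [ij jN] := H1 _ _ Mi.
    have hi1 : i.+1 < 2 * n by lia.
    rewrite /= !mkE; first last.
    * have := sgm_lt hi1; lia.
    * by apply: sgm_lt.
    split.
    * by rewrite occ_core.
    * rewrite prednK ?isv_sg //; rewrite /sg /bump; lia.
Qed.

Lemma occ_isv : #|Occ (isv M x.+1 y.+1)| = #|Occ M|.+1.
Proof.
case: (HM) => H1 H2 H3 H4 H5.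
rewrite Occ_isv cardsU1 card_in_imset.
  suff -> : (mk n x, mk n y.+1) \notin [set tau q | q in Occ M] by rewrite add1n.
  apply/imsetP => -[q qO [/(congr1 (@nat_of_ord _)) e _]].
  rewrite inE in qO; case/andP: qO => _ Mq.
  have [hq _] := has_arc_bound Mq.
  move: e; rewrite !mkE; try lia; try (have := sgm_lt hq; lia).
  move=> e; apply: (@sig_neq_s _ _ st q.1.+1); have := (@sig_ge _ _ st) q.1.+1; move: e; set k := sgm _; lia.
move=> p q; rewrite !inE => /andP [_ Mp] /andP [_ Mq] [/(congr1 (@nat_of_ord _)) e1 /(congr1 (@nat_of_ord _)) e2].
have [hp1 _] := has_arc_bound Mp; have [hq1 _] := has_arc_bound Mq.
move: e1 e2; rewrite !mkE; try (apply: sgm_lt; exact: ltn_ord); try (have := sgm_lt hp1; lia); try (have := sgm_lt hq1; lia).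
move=> e1 e2.
have e1' : sgm p.1.+1 = sgm q.1.+1.
  have := (@sig_ge _ _ st) p.1.+1; have := (@sig_ge _ _ st) q.1.+1; move: e1; set kp := sgm p.1.+1; set kq := sgm q.1.+1; lia.
have f1 := sig_inj st e1'; have f2 := sig_inj st e2.
by case: p q f1 f2 {Mp Mq hp1 hq1 e1 e2 e1'} => [p1 p2] [q1 q2] /= [f1] f2; congr pair; apply: val_inj.
Qed.

End Occ.


Definition Sset n k := [set M : {set arcT n} | is_matching M && (occ21 M == k)].

Lemma a_nkE n k : a_nk n k = #|Sset n k|.
Proof. by []. Qed.

Lemma a1_0 k : a_nk 1 k.+1 = 0.
Proof.
apply/eqP; rewrite a_nkE cards_eq0; apply/eqP/setP => M; rewrite !inE.
apply/negbTE; apply/negP => /andP [/matchingP HM /eqP]; rewrite occ21E => e.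
have : 0 < #|Occ M| by rewrite e.
rewrite card_gt0 => /set0Pn [q]; rewrite inE => /andP [h1 h2].
case: HM => H1 _ _ _ _; have := H1 _ _ h1; have := H1 _ _ h2; lia.
Qed.

Lemma D_rec m k : k.+1 * a_nk m.+2 k.+1 = m.+1 * a_nk m.+1 k.
Proof.
pose P1 := [set X : {set arcT m.+2} * ('I_(2 * m.+2) * 'I_(2 * m.+2)) |
              (X.1 \in Sset m.+2 k.+1) && (X.2 \in Occ X.1)].
pose P2 := [set Y : {set arcT m.+1} * arcT m.+1 | (Y.1 \in Sset m.+1 k) && (Y.2 \in Y.1)].
have c1 : #|P1| = k.+1 * a_nk m.+2 k.+1.
  rewrite card_dep a_nkE [RHS]mulnC -sum_nat_const; apply: eq_bigr => M.
  by rewrite inE => /andP [_ /eqP <-].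
have c2 : #|P2| = m.+1 * a_nk m.+1 k.
  rewrite (card_dep (Sset m.+1 k) (fun M => M)) a_nkE [RHS]mulnC -sum_nat_const; apply: eq_bigr => M.
  by rewrite inE => /andP [/matchingP HM _]; rewrite card_match.
rewrite -c1 -c2.
apply: (@card_bij _ _ _ _
  (fun X : {set arcT m.+2} * ('I_(2 * m.+2) * 'I_(2 * m.+2)) =>
     (rmv X.1 X.2.1.+1 X.2.2, (mk m X.2.1, mk m X.2.2.-1)) : {set arcT m.+1} * arcT m.+1)
  (fun Y : {set arcT m.+1} * arcT m.+1 =>
     (isv Y.1 Y.2.1.+1 Y.2.2.+1, (mk m.+1 Y.2.1, mk m.+1 Y.2.2.+1)))).
- move=> [M [q1 q2]]; rewrite !inE /= => /andP [/andP [/matchingP HM /eqP oM]].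
  case/andP => h1 h2.
  case: (HM) => H1 _ _ _ _.
  have /andP [a1 a2] := H1 _ _ h1; have /andP [b1 b2] := H1 _ _ h2.
  have HM' := rem_match HM h2.
  have sq : q1.+1 < q2 by [].
  have tq : q2 < 2 * m.+2 by [].
  have Ma : has_arc (rmv M q1.+1 q2) q1 q2.-1.
    have e1 : sg q1.+1 q2 q1 = q1 by rewrite /sg /bump; lia.
    have e2 : sg q1.+1 q2 q2.-1 = q2.+1 by rewrite /sg /bump; lia.
    by rewrite rmvE // e1 e2.
  have E : isv (rmv M q1.+1 q2) q1.+1 q2.-1.+1 = M by rewrite prednK ?ins_rem //; lia.
  have [x1 x2] := has_arc_bound Ma.
  rewrite /rmvR !mkE // -rmvE // Ma andbT; apply/andP; split; first by apply/matchingP.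
  rewrite occ21E; apply/eqP; apply: succn_inj; rewrite -(occ_isv HM' Ma) E -occ21E oM //.
- move=> [M [x y]]; rewrite !inE /= => /andP [/andP [/matchingP HM /eqP oM] xyM].
  have Mxy : has_arc M x y by move: xyM; rewrite -has_arcE.
  case: (HM) => H1 _ _ _ _; have /andP [xy yN] := H1 _ _ Mxy.
  have HM' := ins_match (M := M) (s := x.+1) (t := y.+1) xy (ltac:(lia)) HM.
  rewrite /=; apply/andP; split.
    apply/andP; split; first by apply/matchingP.
    by rewrite occ21E occ_isv // -occ21E oM.
  by move: (Occ_isv HM Mxy) => /setP/(_ (mk m.+1 x, mk m.+1 y.+1)); rewrite setU11 inE /=.
- move=> [M [q1 q2]]; rewrite !inE /= => /andP [/andP [/matchingP HM /eqP oM]].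
  case/andP => h1 h2.
  case: (HM) => H1 _ _ _ _.
  have /andP [a1 a2] := H1 _ _ h1; have /andP [b1 b2] := H1 _ _ h2.
  rewrite /= !mkE; try lia.
  rewrite prednK; last by lia.
  rewrite ins_rem //; congr pair; congr pair; apply: val_inj; rewrite /= mkE //; lia.
- move=> [M [x y]]; rewrite !inE /= => /andP [/andP [/matchingP HM /eqP oM] xyM].
  have Mxy : has_arc M x y by move: xyM; rewrite -has_arcE.
  case: (HM) => H1 _ _ _ _; have /andP [xy yN] := H1 _ _ Mxy.
  rewrite /= !mkE; try lia.
  rewrite rem_ins //; try lia.
  congr pair; congr pair; apply: val_inj; rewrite /= mkE //; lia.
Qed.


Definition d j := a_nk j 0.

Lemma a_bin m k : a_nk (m.+1 + k) k = 'C(m + k, k) * d m.+1.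
Proof.
elim: k => [|k IH]; first by rewrite !addn0 bin0 mul1n.
apply/eqP; rewrite -(eqn_pmul2l (ltn0Sn k)).
rewrite (_ : m.+1 + k.+1 = (m + k).+2); last by lia.
rewrite D_rec (_ : (m + k).+1 = m.+1 + k); last by lia.
rewrite IH mulnA (_ : m.+1 + k = (m + k).+1); last by lia.
by rewrite (mul_bin_diag (m + k).+1 k) addnS mulnA.
Qed.

Lemma a_zero m r : a_nk m.+1 (m.+1 + r) = 0.
Proof.
elim: m r => [|m IH] r; first by rewrite add1n a1_0.
have := D_rec m (m.+1 + r); rewrite IH muln0 => /eqP; rewrite muln_eq0 /= => /eqP.
by rewrite (_ : m.+2 + r = (m.+1 + r).+1) //; lia.
Qed.

Lemma occ_le m (M : {set arcT m.+1}) : is_matching M -> occ21 M <= m.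
Proof.
move=> HM; case: leqP => // h.
have : 0 < a_nk m.+1 (occ21 M).
  rewrite a_nkE card_gt0; apply/set0Pn; exists M; by rewrite inE HM eqxx.
by rewrite (_ : occ21 M = m.+1 + (occ21 M - m.+1)) ?a_zero //; lia.
Qed.

Lemma Match_sum m : #|Match m.+1| = \sum_(k < m.+1) a_nk m.+1 k.
Proof.
rewrite -sum1_card (partition_big (fun M => inord (occ21 M) : 'I_m.+1) predT) //=.
apply: eq_bigr => j _; rewrite sum1dep_card a_nkE; apply: eq_card => M; rewrite !inE.
case HM: (is_matching M) => //=.
by rewrite -(inj_eq val_inj) /= inordK // ltnS occ_le.
Qed.

Lemma U_eq m : #|Match m.+1| = \sum_(j < m.+1) 'C(m, j) * d j.+1.
Proof.
rewrite Match_sum (reindex_inj (@rev_ord_inj m.+1)); apply: eq_bigr => j _ /=.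
have hj := ltn_ord j.
have := a_bin j (m - j).
rewrite (_ : j.+1 + (m - j) = m.+1); last by lia.
rewrite (_ : j + (m - j) = m); last by lia.
rewrite bin_sub; last by lia.
by move=> <-; rewrite subSS.
Qed.


Section Alg.
Variables (e U : nat -> nat).
Hypothesis hU : forall m, U m = \sum_(j < m.+1) 'C(m, j) * e j.
Hypothesis hrec : forall m, U m.+1 = (2 * m + 3) * U m.


Lemma b0 i : bump 0 i = i.+1.
Proof. by []. Qed.

Lemma L1 n : \sum_(j < n.+1) 'C(n, j) * e j.+1 + U n = U n.+1.
Proof.
rewrite !hU [\sum_(j < n.+2) _]big_ord_recl [\sum_(j < n.+1) 'C(n, j) * e j]big_ord_recl.
have E1 : \sum_(i < n.+1) 'C(n.+1, lift ord0 i) * e (lift ord0 i) =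
   \sum_(i < n.+1) 'C(n, i) * e i.+1 + \sum_(i < n.+1) 'C(n, i.+1) * e i.+1.
  rewrite -big_split; apply: eq_bigr => j _; by rewrite /= b0 binS mulnDl addnC.
have E2 : \sum_(i < n) 'C(n, lift ord0 i) * e (lift ord0 i) = \sum_(i < n) 'C(n, i.+1) * e i.+1.
  by apply: eq_bigr => j _; rewrite /= b0.
have E3 : \sum_(i < n.+1) 'C(n, i.+1) * e i.+1 = \sum_(i < n) 'C(n, i.+1) * e i.+1.
  by rewrite big_ord_recr /= bin_small // mul0n addn0.
rewrite E1 E2 E3 /= !bin0 !mul1n. lia.
Qed.

Lemma L2 n : \sum_(j < n.+2) 'C(n.+1, j) * j * e j = n.+1 * \sum_(j < n.+1) 'C(n, j) * e j.+1.
Proof.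
rewrite big_ord_recl /= muln0 mul0n add0n big_distrr; apply: eq_bigr => j _ /=.
rewrite b0 mulnA (mul_bin_diag n.+1 j); lia.
Qed.

Lemma L3 n : \sum_(j < n.+2) 'C(n.+1, j) * j * e j.-1 = n.+1 * U n.
Proof.
rewrite hU big_ord_recl /= muln0 mul0n add0n big_distrr; apply: eq_bigr => j _ /=.
rewrite b0 mulnA (mul_bin_diag n.+1 j) ?add0n; lia.
Qed.

Definition g j := (2 * j + 2) * e j + 2 * j * e j.-1.

Lemma e_rec n : e n.+1 = g n.
Proof.
elim/ltn_ind: n => n IH.
have HA : \sum_(j < n.+1) 'C(n, j) * e j.+1 = (2 * n + 2) * U n.
  have := L1 n; rewrite hrec; lia.
have HB : \sum_(j < n.+1) 'C(n, j) * g j =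
   2 * (\sum_(j < n.+1) 'C(n, j) * j * e j) + 2 * U n + 2 * (\sum_(j < n.+1) 'C(n, j) * j * e j.-1).
  rewrite hU !big_distrr -!big_split; apply: eq_bigr => j _ /=; rewrite /g; lia.
have AB : \sum_(j < n.+1) 'C(n, j) * e j.+1 = \sum_(j < n.+1) 'C(n, j) * g j.
  rewrite HA HB; case: n {IH HA HB} => [|m].
    by rewrite !big_ord_recl !big_ord0 /=; lia.
  rewrite L2 L3; have := L1 m; rewrite hrec => H.
  have HAm : \sum_(j < m.+1) 'C(m, j) * e j.+1 = (2 * m + 2) * U m by lia.
  rewrite HAm; nia.
move: AB; rewrite !big_ord_recr /= binn !mul1n.
rewrite (eq_bigr (fun j : 'I_n => 'C(n, j) * g j)); last by move=> j _; rewrite IH.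
lia.
Qed.

End Alg.


Definition ee j := d j.+1.
Definition UU m := #|Match m.+1|.

Lemma hU m : UU m = \sum_(j < m.+1) 'C(m, j) * ee j.
Proof. exact: U_eq. Qed.

Lemma hrec m : UU m.+1 = (2 * m + 3) * UU m.
Proof. rewrite /UU card_Match_rec; congr (_ * _); lia. Qed.

Lemma ee0 : ee 0 = 1.
Proof.
have := hU 0; rewrite big_ord1 bin0 mul1n => <-.
by rewrite /UU card_Match_rec card_Match0.
Qed.

Lemma ee_bounds p : 0 < ee p /\ 2 * p.+1 * ee p <= ee p.+1 <= (2 * p + 3) * ee p.
Proof.
have R n : ee n.+1 = (2 * n + 2) * ee n + 2 * n * ee n.-1 := e_rec hU hrec n.
elim: p => [|p [IH1 /andP [IH2 IH3]]].
  by rewrite R ee0 /=.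
have R1 := R p.+1; rewrite /= in R1.
split; first by nia.
apply/andP; split; nia.
Qed.

Lemma ratio_bounds k p :
  let A := a_nk (p.+2 + k) k in let B := a_nk (p.+2 + k) k.+1 in
  [/\ 0 < B, 2 * k.+1 * B <= A & p.+1 * A <= (2 * p + 3) * k.+1 * B].
Proof.
move=> A B.
set q := p.+1 + k.
have HA : A = 'C(q, k) * ee p.+1 by rewrite /A /q -a_bin.
have HB : B = 'C(q, k.+1) * ee p.
  rewrite /B /q (_ : p.+2 + k = p.+1 + k.+1); last by lia.
  by rewrite a_bin /ee (_ : p + k.+1 = p.+1 + k) //; lia.
have Hrel : k.+1 * 'C(q, k.+1) = p.+1 * 'C(q, k).
  by rewrite mul_bin_left /q (_ : p.+1 + k - k = p.+1) //; lia.
have [h0 /andP [hlo hhi]] := ee_bounds p.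
have c0 : 0 < 'C(q, k) by rewrite bin_gt0 /q; lia.
have c1 : 0 < 'C(q, k.+1) by rewrite bin_gt0 /q; lia.
have E1 : k.+1 * B = p.+1 * 'C(q, k) * ee p by rewrite HB mulnA Hrel.
split.
- by rewrite HB muln_gt0 c1 h0.
- have := leq_mul (leqnn 'C(q, k)) hlo; rewrite HA; lia.
- have := leq_mul (leqnn (p.+1 * 'C(q, k))) hhi.
  have E2 := congr1 (muln (2 * p + 3)) E1.
  rewrite HA; lia.
Qed.


Lemma INR_mul (a b : nat) : INR (a * b) = (INR a * INR b)%R.
Proof. by rewrite -multE mult_INR. Qed.
Lemma INR_add (a b : nat) : INR (a + b) = (INR a + INR b)%R.
Proof. by rewrite -plusE plus_INR. Qed.

Theorem corollary5 (k : nat) :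
  Un_cv (fun n : nat => (INR (a_nk n k) / INR (a_nk n k.+1))%R)
        (2 * INR k.+1)%R.
Proof.
move=> eps Heps.
have [p0 Hp0] := INR_archimed eps (INR k.+1) Heps.
exists (p0 + k + 2) => n Hn.
have En : n = (n - k - 2).+2 + k by lia.
have Hp : p0 <= n - k - 2 by lia.
move: (n - k - 2) En Hp => p -> Hp.
have [B0 Hlo Hhi] := ratio_bounds k p.
move: B0 Hlo Hhi.
set A := a_nk (p.+2 + k) k; set B := a_nk (p.+2 + k) k.+1 => B0 Hlo Hhi.
have RB : (0 < INR B)%R by apply: lt_0_INR; apply/ltP.
have I2 : INR 2 = 2%R by simpl; lra.
have I3 : INR 3 = 3%R by simpl; lra.
have RLo : (2 * INR k.+1 * INR B <= INR A)%R.
  by have := le_INR _ _ (elimT leP Hlo); rewrite !INR_mul I2.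
have RHi : (INR p.+1 * INR A <= (2 * INR p + 3) * INR k.+1 * INR B)%R.
  have := le_INR _ _ (elimT leP Hhi); rewrite !INR_mul INR_add INR_mul.
  by rewrite I2 I3.
have Rp0 : (INR p0 <= INR p)%R by apply: le_INR; apply/leP.
have Pp : (0 <= INR p)%R by apply: pos_INR.
have Kp : (0 <= INR k)%R by apply: pos_INR.
have Sk : INR k.+1 = (INR k + 1)%R by rewrite S_INR.
have Sp : INR p.+1 = (INR p + 1)%R by rewrite S_INR.
rewrite Sk in Hp0 RLo RHi *; rewrite Sp in RHi.
rewrite /Rdist.
have eqAB : (INR A / INR B * INR B = INR A)%R by field; lra.
have X1 : (2 * (INR k + 1) <= INR A / INR B)%R.
  apply: (Rmult_le_reg_r (INR B)) => //; rewrite eqAB; lra.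
have X2 : (INR A / INR B <= 2 * (INR k + 1) + (INR k + 1) / (INR p + 1))%R.
  apply: (Rmult_le_reg_r (INR B)) => //; rewrite eqAB.
  apply: (Rmult_le_reg_l (INR p + 1)); first by lra.
  replace ((INR p + 1) * ((2 * (INR k + 1) + (INR k + 1) / (INR p + 1)) * INR B))%R
    with ((2 * INR p + 3) * (INR k + 1) * INR B)%R by (field; lra).
  lra.
have X3 : ((INR k + 1) / (INR p + 1) < eps)%R.
  apply: (Rmult_lt_reg_r (INR p + 1)); first by lra.
  replace ((INR k + 1) / (INR p + 1) * (INR p + 1))%R with (INR k + 1)%R by (field; lra).
  have : (INR p0 * eps <= INR p * eps)%R by apply: Rmult_le_compat_r; lra.
  lra.
rewrite Rabs_pos_eq; lra.
Qed.
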